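(* Let $H$ be a complex Hilbert space, $A,B\in\mathbb{B}(H)$, $t\in[0,1]$, and let $\varphi,\psi,\varphi_1,\varphi_2,\psi_1,\psi_2:[0,1]\to\mathbb{R}$ be continuous. Then: (1) $\omega_t(0,\psi;A)=|\psi(t)|\,\omega(A)$ and $c_t(0,\psi;A)=|\psi(t)|\,c(A)$; (2) $\omega_t(\varphi,0;A)=|\varphi(t)|\,\omega(A)$ and $c_t(\varphi,0;A)=|\varphi(t)|\,c(A)$; (3) $\omega_t(1,1;A)=2\|\operatorname{Re}A\|$ and $c_t(1,1;A)=2c(\operatorname{Re}A)$; (4) $\omega_t(1,-1;A)=2\|\operatorname{Im}A\|$ and $c_t(1,-1;A)=2c(\operatorname{Im}A)$; (5) $\omega_t(\varphi,\psi;iA)=\omega_t(\varphi,-\psi;A)$; (6) $\frac12\|A\|_t\le\omega_t(\varphi,\psi;A)\le\|A\|_t$; (7) $\omega_t(\varphi,\psi;A)\le(|\varphi(t)|+|\psi(t)|)\,\omega(A)$ and $c_t(\varphi,\psi;A)\ge\big||\varphi(t)|-|\psi(t)|\big|\,c(A)$; (8) $\omega_t(\varphi,\varphi;A)=2|\varphi(t)|\,\omega(\operatorname{Re}A)=2|\varphi(t)|\,\|\operatorname{Re}A\|$; (9) $\omega_t(\psi,\psi;A)=2|\psi(t)|\,\omega(\operatorname{Re}A)=2|\psi(t)|\,\|\operatorname{Re}A\|$; (10) if $A=A^*$, then $\omega_t(\varphi,\psi;A)=|\varphi(t)+\psi(t)|\,\omega(A)=|\varphi(t)+\psi(t)|\,\|A\|$;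 (11) $\omega_t(\varphi,\psi;A)=\omega_t(\psi,\varphi;A^* )$; (12) if $A=A^*$, then $\omega_t(\varphi,\psi;A)=\omega_t(\psi,\varphi;A)$; (13) $\omega_t(\varphi,\psi;A+B)\le\omega_t(\varphi,\psi;A)+\omega_t(\varphi,\psi;B)$; (14) $c_t(\varphi,\psi;A+B)\le\omega_t(\varphi,\psi;A)+c_t(\varphi,\psi;B)$; (15) $\omega_t(\varphi,\psi;AB)\le(|\varphi(t)|+|\psi(t)|)\,\omega(AB)$; (16) $c_t(\varphi,\psi;AB)\le|\varphi(t)|\,c(AB)+|\psi(t)|\,\omega(AB)$; (17) $\|\varphi(t)AB+\psi(t)(AB)^*\|^2\le(|\varphi(t)|^2+|\psi(t)|^2)\|AB\|^2+|\varphi(t)\psi(t)|\,\omega((AB)^2)+|\varphi(t)\psi(t)|\,\omega((B^*A^* )^2)$; (18) $\omega_t(\varphi_1+\varphi_2,\psi_1+\psi_2;A)\le\omega_t(\varphi_1,\psi_1;A)+\omega_t(\varphi_2,\psi_2;A)$; (19) $c_t(\varphi,\psi;A)\ge\min\{|\varphi(t)+\psi(t)|,|\varphi(t)-\psi(t)|\}\,m(A)$, where $m(A)=\inf_{x\in S_1(H)}|\langle Ax,x\rangle|$.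
   Context: $\mathbb{B}(H)$ is the algebra of bounded linear operators on $H$, $S_1(H)=\{x\in H:\|x\|=1\}$. For $A\in\mathbb{B}(H)$: $\omega(A)=\sup_{x\in S_1(H)}|\langle Ax,x\rangle|$ (numerical radius), $c(A)=\inf_{x\in S_1(H)}|\langle Ax,x\rangle|$ (Crawford number), $\operatorname{Re}A=(A+A^* )/2$, $\operatorname{Im}A=(A-A^* )/(2i)$. For real-valued functions $\varphi,\psi$ on $[0,1]$ and $t\in[0,1]$: the weighted numerical radius $\omega_t(\varphi,\psi;A)=\sup_{x\in S_1(H)}|\langle(\varphi(t)A+\psi(t)A^* )x,x\rangle|$, the weighted Crawford number $c_t(\varphi,\psi;A)=\inf_{x\in S_1(H)}|\langle(\varphi(t)A+\psi(t)A^* )x,x\rangle|$, and the weighted norm $\|A\|_t=\|\varphi(t)A+\psi(t)A^*\|$. Numbers such as $0,1,-1$ in the weight slots denote constant functions. *)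

(* Defs.v *)
From HB Require Import structures.
From mathcomp Require Import all_boot all_order all_algebra.
From mathcomp Require Import complex.
From mathcomp Require Import all_classical all_reals all_analysis.
Set Implicit Arguments. Unset Strict Implicit. Unset Printing Implicit Defensive.
Import Order.TTheory GRing.Theory Num.Theory.
Import numFieldNormedType.Exports.
Local Open Scope ring_scope.
Local Open Scope complex_scope.
Local Open Scope classical_set_scope.

Section Hilbert.
Variable R : realType.
Variable H : lmodType R[i].
Variable ip : H -> H -> R[i].   (* inner product <x, y>, linear in x *)

Definition cabs (z : R[i]) : R := @Normc.normc R z.

Definition RtoC (r : R) : R[i] := r%:C.

Definition inner_product : Prop :=
  [/\ (forall (a : R[i]) (x y z : H), ip (a *: x + y) z = a * ip x z + ip y z),
      (forall x y : H, ip y x = (ip x y)^*),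
      (forall x : H, 0 <= ip x x) &
      (forall x : H, ip x x = 0 -> x = 0)].

Definition hnorm (x : H) : R := Num.sqrt (@complex.Re R (ip x x)).

Definition complete_ip : Prop :=
  forall u : nat -> H,
    (forall e : R, 0 < e -> exists N : nat, forall m n : nat,
        (N <= m)%N -> (N <= n)%N -> hnorm (u m - u n) < e) ->
    exists l : H, forall e : R, 0 < e -> exists N : nat, forall n : nat,
        (N <= n)%N -> hnorm (u n - l) < e.

Definition hilbert_space : Prop := inner_product /\ complete_ip.

Definition bounded_op (A : H -> H) : Prop :=
  (forall (a : R[i]) (x y : H), A (a *: x + y) = a *: A x + A y) /\
  exists M : R, forall x : H, hnorm (A x) <= M * hnorm x.

Definition is_adjoint (A As : H -> H) : Prop :=
  forall x y : H, ip (A x) y = ip x (As y).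

Definition adj (A : H -> H) : H -> H :=
  fun y => xget 0 [set z | forall x : H, ip (A x) y = ip x z].

Definition sphere1 : set H := [set x | hnorm x = 1].

Definition numrad (A : H -> H) : R :=
  sup [set cabs (ip (A x) x) | x in sphere1].
Definition crawford (A : H -> H) : R :=
  inf [set cabs (ip (A x) x) | x in sphere1].
Definition opnorm (A : H -> H) : R :=
  sup [set hnorm (A x) | x in sphere1].

Definition opadd (A B : H -> H) : H -> H := fun x => A x + B x.
Definition opscale (a : R[i]) (A : H -> H) : H -> H := fun x => a *: A x.
Definition opmul (A B : H -> H) : H -> H := fun x => A (B x).

Definition ReOp (A : H -> H) : H -> H :=
  fun x => (2 : R[i])^-1 *: (A x + adj A x).
Definition ImOp (A : H -> H) : H -> H :=
  fun x => (2 * 'i : R[i])^-1 *: (A x - adj A x).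

Definition wop (phi psi : R -> R) (t : R) (A : H -> H) : H -> H :=
  fun x => RtoC (phi t) *: A x + RtoC (psi t) *: adj A x.

Definition wnumrad phi psi t A : R := numrad (wop phi psi t A).
Definition wcrawford phi psi t A : R := crawford (wop phi psi t A).
Definition wnorm phi psi t A : R := opnorm (wop phi psi t A).

End Hilbert.

Definition cstw (R : realType) (c : R) : R -> R := fun _ => c.
Definition addw (R : realType) (f g : R -> R) : R -> R := fun s => f s + g s.
Definition oppw (R : realType) (f : R -> R) : R -> R := fun s => - f s.

Definition cont01 (R : realType) (f : R -> R) : Prop :=
  {within `[(0:R), (1:R)]%classic, continuous f}.

(* Main.v *)
Set Warnings "-all".
Require Import Defs.
From HB Require Import structures.
From mathcomp Require Import all_boot all_order all_algebra.
From mathcomp Require Import complex.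
From mathcomp Require Import all_classical all_reals all_analysis.
From mathcomp Require Import ring lra.
Import Order.TTheory GRing.Theory Num.Theory.
Import numFieldNormedType.Exports.
Local Open Scope ring_scope.
Local Open Scope complex_scope.
Section SupInf.
Context {R : realType} {T : Type} {S : set T}.
Local Open Scope classical_set_scope.

Lemma img_empty (f : T -> R) : ~ (exists x, S x) -> f @` S = set0.
Proof.
move=> nS; apply/seteqP; split => y //= [x Sx _]; apply: nS; by exists x.
Qed.

Lemma le_supS (f : T -> R) (M : R) x : (forall y, S y -> f y <= M) -> S x ->
  f x <= sup (f @` S).
Proof.
move=> hM Sx; apply: ub_le_sup; last by exists x.
by exists M => _ [y Sy <-]; apply: hM.
Qed.

Lemma supS_le (f : T -> R) c : (forall y, S y -> f y <= c) -> 0 <= c ->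
  sup (f @` S) <= c.
Proof.
move=> hc c0; have [[x Sx]|nS] := pselect (exists x, S x).
  by apply: ge_sup; [exists (f x), x | move=> _ [y Sy <-]; apply: hc].
by rewrite img_empty // sup0.
Qed.

Lemma supS_ge0 (f : T -> R) (M : R) : (forall y, S y -> 0 <= f y <= M) ->
  0 <= sup (f @` S).
Proof.
move=> hf; have [[x Sx]|nS] := pselect (exists x, S x).
  have /andP[h1 _] := hf x Sx; apply: le_trans h1 _.
  by apply: (le_supS _ M) => // y Sy; case/andP: (hf y Sy).
by rewrite img_empty // sup0.
Qed.

Lemma supS_mono (f g : T -> R) (M : R) : (forall y, S y -> 0 <= f y <= g y) ->
  (forall y, S y -> g y <= M) -> sup (f @` S) <= sup (g @` S).
Proof.
move=> hfg hg; apply: supS_le.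
  move=> y Sy; case/andP: (hfg y Sy) => _ h; apply: le_trans h _.
  exact: (le_supS _ M).
apply: (supS_ge0 _ M) => y Sy; case/andP: (hfg y Sy) => h1 h2.
by rewrite (le_trans h1 h2) hg.
Qed.

Lemma supS_add (f g h : T -> R) (M : R) : (forall y, S y -> 0 <= h y <= f y + g y) ->
  (forall y, S y -> 0 <= f y <= M) -> (forall y, S y -> 0 <= g y <= M) ->
  sup (h @` S) <= sup (f @` S) + sup (g @` S).
Proof.
move=> hh hf hg; apply: supS_le.
  move=> y Sy; case/andP: (hh y Sy) => _ e; apply: le_trans e _.
  apply: lerD; apply: (le_supS _ M) => // z Sz.
  by case/andP: (hf z Sz). by case/andP: (hg z Sz).
by rewrite addr_ge0 // (supS_ge0 _ M).
Qed.

Lemma supS_scale (f : T -> R) c (M : R) : 0 <= c -> (forall y, S y -> 0 <= f y <= M) ->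
  sup ((fun x => c * f x) @` S) = c * sup (f @` S).
Proof.
move=> c0 hf; have hM : forall y, S y -> f y <= M by move=> y /hf /andP[].
apply/eqP; rewrite eq_le; apply/andP; split.
  apply: supS_le; last by rewrite mulr_ge0 // (supS_ge0 _ M).
  by move=> y Sy; rewrite ler_wpM2l // (le_supS _ M).
have [->|cp] := eqVneq c 0.
  rewrite mul0r; apply: (supS_ge0 _ 0) => y _; by rewrite mul0r lexx.
have c0' : 0 < c by rewrite lt_def cp.
rewrite -ler_pdivlMl //; apply: supS_le.
  move=> y Sy; rewrite ler_pdivlMl //.
  apply: (le_supS _ (c * M)) => // z Sz; rewrite ler_wpM2l //; exact: hM.
rewrite mulr_ge0 ?invr_ge0 //; apply: (supS_ge0 _ (c*M)) => z Sz.
by case/andP: (hf z Sz) => h1 h2; rewrite mulr_ge0 //= ler_wpM2l.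
Qed.

Lemma infS_le (f : T -> R) x : (forall y, S y -> 0 <= f y) -> S x ->
  inf (f @` S) <= f x.
Proof.
move=> hf Sx; apply: ge_inf; last by exists x.
by exists 0 => _ [y Sy <-]; apply: hf.
Qed.

Lemma infS_ge0 (f : T -> R) : (forall y, S y -> 0 <= f y) -> 0 <= inf (f @` S).
Proof.
move=> hf; have [[x Sx]|nS] := pselect (exists x, S x).
  by apply: lb_le_inf; [exists (f x), x | move=> _ [y Sy <-]; apply: hf].
by rewrite img_empty // inf0.
Qed.

Lemma infS_mono (f g : T -> R) : (forall y, S y -> 0 <= f y <= g y) ->
  inf (f @` S) <= inf (g @` S).
Proof.
move=> hfg; have hf : forall y, S y -> 0 <= f y by move=> y /hfg /andP[].
have [[x Sx]|nS] := pselect (exists x, S x); last first.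
  by rewrite !img_empty // inf0.
apply: lb_le_inf; first by exists (g x), x.
move=> _ [y Sy <-]; case/andP: (hfg y Sy) => _ h; apply: le_trans h.
exact: infS_le.
Qed.

Lemma infS_affine (g h : T -> R) a b : 0 <= a -> 0 <= b ->
  (forall y, S y -> 0 <= g y <= a * h y + b) -> (forall y, S y -> 0 <= h y) ->
  inf (g @` S) <= a * inf (h @` S) + b.
Proof.
move=> a0 b0 hg hh; have g0 : forall y, S y -> 0 <= g y by move=> y /hg /andP[].
have [[x Sx]|nS] := pselect (exists x, S x); last first.
  by rewrite !img_empty // inf0 mulr0 add0r.
have [a0e|ap] := eqVneq a 0.
  rewrite a0e mul0r add0r; apply: le_trans (infS_le _ _ g0 Sx) _.
  by move: (hg x Sx) => /andP[_]; rewrite a0e mul0r add0r.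
have a0' : 0 < a by rewrite lt_def ap.
rewrite -lerBlDr -ler_pdivrMl //; apply: lb_le_inf; first by exists (h x), x.
move=> _ [y Sy <-]; rewrite ler_pdivrMl // lerBlDr.
apply: le_trans (infS_le _ _ g0 Sy) _; by case/andP: (hg y Sy).
Qed.

Lemma infS_scale (f : T -> R) c : 0 <= c -> (forall y, S y -> 0 <= f y) ->
  inf ((fun x => c * f x) @` S) = c * inf (f @` S).
Proof.
move=> c0 hf; have [[x Sx]|nS] := pselect (exists x, S x); last first.
  by rewrite !img_empty // inf0 mulr0.
have hcf : forall y, S y -> 0 <= c * f y by move=> y Sy; rewrite mulr_ge0 // hf.
apply/eqP; rewrite eq_le; apply/andP; split.
  have := @infS_affine (fun x => c * f x) f c 0 c0 (lexx 0).
  rewrite addr0; apply=> //= y Sy; by rewrite addr0 hcf //= lexx.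
have [->|cp] := eqVneq c 0; first by rewrite mul0r; apply: infS_ge0 => y _; rewrite mul0r.
have c0' : 0 < c by rewrite lt_def cp.
apply: lb_le_inf; first by exists (c * f x), x.
by move=> _ [y Sy <-]; rewrite ler_wpM2l // infS_le.
Qed.

End SupInf.
Section CabsLemmas.
Variable R : realType.
Implicit Types (u v z : R[i]) (r : R).

Lemma cabs_sq z : cabs z ^+ 2 = complex.Re z ^+ 2 + complex.Im z ^+ 2.
Proof. by case: z => a b; rewrite /cabs /= sqr_sqrtr // addr_ge0 // sqr_ge0. Qed.

Lemma cabs_ge0 z : 0 <= cabs z.
Proof. by case: z => a b; rewrite /cabs /= sqrtr_ge0. Qed.

Lemma cabsM u v : cabs (u * v) = cabs u * cabs v.
Proof. exact: Normc.normcM. Qed.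

Lemma cabsD u v : cabs (u + v) <= cabs u + cabs v.
Proof. exact: le_normcD. Qed.

Lemma cabsJ z : cabs ((conjc z)) = cabs z.
Proof. by case: z => a b; rewrite /cabs /= sqrrN. Qed.

Lemma cabsN z : cabs (- z) = cabs z.
Proof. by case: z => a b; rewrite /cabs /= !sqrrN. Qed.

Lemma cabsR r : cabs (r%:C) = `|r|.
Proof. by rewrite /cabs /= expr0n /= addr0 sqrtr_sqr. Qed.

Lemma cabs_Re z : complex.Re z <= cabs z.
Proof.
case: z => a b; rewrite /cabs /=; apply: le_trans (ler_norm a) _.
by rewrite -sqrtr_sqr ler_sqrt ?addr_ge0 ?sqr_ge0 // lerDl sqr_ge0.
Qed.

Lemma cabs_normRe z : `|complex.Re z| <= cabs z.
Proof.
case: z => a b; rewrite /cabs /=.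
by rewrite -sqrtr_sqr ler_sqrt ?addr_ge0 ?sqr_ge0 // lerDl sqr_ge0.
Qed.

Lemma cabs_i : cabs 'i = 1 :> R.
Proof. by rewrite /cabs /= expr0n expr1n add0r sqrtr1. Qed.

Lemma cabs_le (u v : R[i]) (c : R) : 0 <= c ->
  cabs u ^+ 2 <= c ^+ 2 * cabs v ^+ 2 -> cabs u <= c * cabs v.
Proof.
move=> c0 h; rewrite -ler_sqr ?nnegrE ?mulr_ge0 ?cabs_ge0 //.
by rewrite exprMn.
Qed.

Lemma cabs_ge (u v : R[i]) (c : R) : 0 <= c ->
  c ^+ 2 * cabs v ^+ 2 <= cabs u ^+ 2 -> c * cabs v <= cabs u.
Proof.
move=> c0 h; rewrite -ler_sqr ?nnegrE ?mulr_ge0 ?cabs_ge0 //.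
by rewrite exprMn.
Qed.

End CabsLemmas.
Section IP.
Variables (R : realType) (H : lmodType R[i]) (ip : H -> H -> R[i]).
Hypothesis hip : inner_product ip.
Local Notation Re := (@complex.Re R).
Local Notation Im := (@complex.Im R).

Lemma conjD (u v : R[i]) : (conjc (u + v)) = (conjc u) + (conjc v).
Proof. exact: rmorphD. Qed.
Lemma conjM (u v : R[i]) : (conjc (u * v)) = (conjc u) * (conjc v).
Proof. exact: rmorphM. Qed.
Lemma conjN (u : R[i]) : (conjc (- u)) = - (conjc u).
Proof. exact: rmorphN. Qed.
Lemma conjB (u v : R[i]) : (conjc (u - v)) = (conjc u) - (conjc v).
Proof. exact: rmorphB. Qed.
Lemma conjK (u : R[i]) : (conjc (conjc u)) = u.
Proof. by case: u => a b /=; rewrite opprK. Qed.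
Lemma conj1 : (conjc (1 : R[i])) = 1.
Proof. exact: rmorph1. Qed.
Lemma conj0 : (conjc (0 : R[i])) = 0.
Proof. exact: rmorph0. Qed.

Definition qn (x : H) : R := Re (ip x x).

Lemma ipAx a x y z : ip (a *: x + y) z = a * ip x z + ip y z.
Proof. by case: hip. Qed.
Lemma ipJ x y : ip y x = (conjc (ip x y)).
Proof. by case: hip. Qed.
Lemma ip_ge0 x : 0 <= ip x x.
Proof. by case: hip. Qed.
Lemma ip_eq0 x : ip x x = 0 -> x = 0.
Proof. by case: hip => _ _ _; apply. Qed.

Lemma ipDl x y z : ip (x + y) z = ip x z + ip y z.
Proof. by rewrite -[x]scale1r ipAx mul1r scale1r. Qed.
Lemma ip0l z : ip 0 z = 0.
Proof.
have h := ipDl 0 0 z; rewrite addr0 in h.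
have : ip 0 z + ip 0 z - ip 0 z = ip 0 z - ip 0 z by rewrite -h.
by rewrite addrK subrr.
Qed.
Lemma ipZl a x z : ip (a *: x) z = a * ip x z.
Proof. by rewrite -[a *: x]addr0 ipAx ip0l addr0. Qed.
Lemma ipNl x z : ip (- x) z = - ip x z.
Proof. by rewrite -scaleN1r ipZl mulN1r. Qed.
Lemma ipBl x y z : ip (x - y) z = ip x z - ip y z.
Proof. by rewrite ipDl ipNl. Qed.
Lemma ipDr x y z : ip z (x + y) = ip z x + ip z y.
Proof. rewrite (ipJ (x + y) z) (ipJ x z) (ipJ y z) ipDl; exact: conjD. Qed.
Lemma ipZr a x z : ip z (a *: x) = (conjc a) * ip z x.
Proof. rewrite (ipJ (a *: x) z) (ipJ x z) ipZl; exact: conjM. Qed.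
Lemma ip0r z : ip z 0 = 0.
Proof. by rewrite ipJ ip0l conj0. Qed.
Lemma ipNr x z : ip z (- x) = - ip z x.
Proof. rewrite (ipJ (- x) z) (ipJ x z) ipNl; exact: conjN. Qed.
Lemma ipBr x y z : ip z (x - y) = ip z x - ip z y.
Proof. by rewrite ipDr ipNr. Qed.

Lemma ipxx x : ip x x = (qn x)%:C.
Proof.
have := ip_ge0 x; rewrite lecE /qn; case: (ip x x) => a b /= /andP[/eqP -> _].
by [].
Qed.

Lemma qn_ge0 x : 0 <= qn x.
Proof. by have := ip_ge0 x; rewrite ipxx lecR. Qed.

Lemma qn_eq0 x : qn x = 0 -> x = 0.
Proof. by move=> h; apply: ip_eq0; rewrite ipxx h. Qed.

Lemma hnorm_ge0 x : 0 <= hnorm ip x.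
Proof. exact: sqrtr_ge0. Qed.

Lemma hnorm_sq x : hnorm ip x ^+ 2 = qn x.
Proof. by rewrite /hnorm sqr_sqrtr // qn_ge0. Qed.

Lemma hnorm_eq0 x : hnorm ip x = 0 -> x = 0.
Proof. by move=> h; apply: qn_eq0; rewrite -hnorm_sq h expr0n. Qed.

Lemma ReJ (z : R[i]) : Re ((conjc z)) = Re z.
Proof. by case: z. Qed.
Lemma ImJ (z : R[i]) : Im ((conjc z)) = - Im z.
Proof. by case: z. Qed.

Lemma qnD x y : qn (x + y) = qn x + qn y + 2 * Re (ip x y).
Proof.
rewrite /qn ipDl !ipDr [ip y x]ipJ.
rewrite !raddfD /= ReJ; ring.
Qed.

Lemma qnZ a x : qn (a *: x) = cabs a ^+ 2 * qn x.
Proof.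
rewrite /qn ipZl ipZr ipxx cabs_sq; case: a => a b /=; ring.
Qed.

Lemma hnormZ a x : hnorm ip (a *: x) = cabs a * hnorm ip x.
Proof.
by rewrite /hnorm -/(qn _) qnZ sqrtrM ?sqr_ge0 // sqrtr_sqr ger0_norm ?cabs_ge0.
Qed.

Lemma CS_sq x y : cabs (ip x y) ^+ 2 <= qn x * qn y.
Proof.
have [y0|yn0] := eqVneq (qn y) 0.
  by rewrite y0 mulr0 (qn_eq0 _ y0) ip0r /cabs /= expr0n /= addr0 sqrtr0 expr0n.
have qy : 0 < qn y by rewrite lt_def yn0 qn_ge0.
pose s := (qn y)^-1.
pose c := ip x y.
pose b : R[i] := Complex (- (Re c * s)) (- (Im c * s)).
have := qn_ge0 (x + b *: y); rewrite qnD qnZ ipZr.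
have -> : cabs b ^+ 2 = (Re c ^+ 2 + Im c ^+ 2) * s ^+ 2.
  by rewrite cabs_sq /b /=; ring.
have -> : Re ((conjc b) * ip x y) = - (Re c ^+ 2 + Im c ^+ 2) * s.
  by rewrite /b /c; case: (ip x y) => c1 c2 /=; ring.
rewrite cabs_sq -/c => h.
have sq : s * qn y = 1 by rewrite mulVf.
have s0 : 0 < s by rewrite invr_gt0.
have : (Re c ^+ 2 + Im c ^+ 2) * s <= qn x.
  have e : (Re c ^+ 2 + Im c ^+ 2) * s ^+ 2 * qn y = (Re c ^+ 2 + Im c ^+ 2) * s.
    by rewrite expr2 -!mulrA sq mulr1.
  move: h; rewrite e; lra.
rewrite -ler_pdivlMr // /s invrK //.
Qed.

Lemma CS x y : cabs (ip x y) <= hnorm ip x * hnorm ip y.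
Proof.
rewrite -ler_sqr ?nnegrE ?mulr_ge0 ?cabs_ge0 ?hnorm_ge0 //.
by rewrite exprMn !hnorm_sq CS_sq.
Qed.

Lemma hnormD x y : hnorm ip (x + y) <= hnorm ip x + hnorm ip y.
Proof.
rewrite -ler_sqr ?nnegrE ?addr_ge0 ?hnorm_ge0 //.
rewrite hnorm_sq qnD sqrrD !hnorm_sq.
have := le_trans (@cabs_Re _ (ip x y)) (CS x y); lra.
Qed.

Lemma qn_par x y : qn (x + y) + qn (x - y) = 2 * qn x + 2 * qn y.
Proof.
rewrite !qnD -scaleN1r qnZ ipZr.
have -> : cabs (-1 : R[i]) = 1.
  by rewrite /cabs /= ?oppr0 ?expr0n ?sqrrN ?expr1n ?addr0 ?sqrtr1.
have -> : forall c : R[i], Re ((conjc (-1)) * c) = - Re c.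
  by move=> [a b]; simpc; rewrite /=.
ring.
Qed.

Lemma ip_ext p p' : (forall u, ip u p = ip u p') -> p = p'.
Proof.
move=> h; apply/eqP; rewrite -subr_eq0; apply/eqP; apply: ip_eq0.
by rewrite ipBr h subrr.
Qed.


Definition lin (T : H -> H) := forall a x y, T (a *: x + y) = a *: T x + T y.
Definition bnd (T : H -> H) :=
  exists M, 0 <= M /\ forall x, hnorm ip (T x) <= M * hnorm ip x.
Definition hasadj (T : H -> H) := exists S, is_adjoint ip T S.

Lemma bounded_lin T : bounded_op ip T -> lin T.
Proof. by case. Qed.
Lemma bounded_bnd T : bounded_op ip T -> bnd T.
Proof.
case=> _ [M hM]; exists (Num.max M 0); split; first by rewrite le_max lexx orbT.
move=> x; apply: le_trans (hM x) _; apply: ler_wpM2r; first exact: hnorm_ge0.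
by rewrite le_max lexx.
Qed.

Lemma linD {T} : lin T -> forall x y, T (x + y) = T x + T y.
Proof. by move=> hT x y; rewrite -[x]scale1r hT !scale1r. Qed.
Lemma lin0 {T} : lin T -> T 0 = 0.
Proof.
move=> hT; have h := linD hT 0 0; rewrite addr0 in h.
have : T 0 + T 0 - T 0 = T 0 - T 0 by rewrite -h.
by rewrite addrK subrr.
Qed.
Lemma linZ {T} : lin T -> forall a x, T (a *: x) = a *: T x.
Proof. by move=> hT a x; rewrite -[a *: x]addr0 hT lin0 // addr0. Qed.
Lemma linN {T} : lin T -> forall x, T (- x) = - T x.
Proof. by move=> hT x; rewrite -scaleN1r linZ // scaleN1r. Qed.
Lemma linB {T} : lin T -> forall x y, T (x - y) = T x - T y.
Proof. by move=> hT x y; rewrite linD // linN. Qed.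

Lemma hnorm0 : hnorm ip 0 = 0.
Proof. by rewrite /hnorm ip0l /= sqrtr0. Qed.

Lemma adj_spec T : hasadj T -> forall x y, ip (T x) y = ip x (adj ip T y).
Proof.
move=> [S hS] x y.
have hx := @xgetPex _ 0 (fun z : H => forall x, ip (T x) y = ip x z).
suff h : forall u, ip (T u) y = ip u (adj ip T y) by apply: h.
by apply: hx; exists (S y) => u; apply: hS.
Qed.

Lemma adj_uniq T S : is_adjoint ip T S -> adj ip T = S.
Proof.
move=> hS; apply: funext => y; apply: ip_ext => u.
by rewrite -adj_spec; [apply: hS | exists S].
Qed.

Lemma adj_adjoint T : hasadj T -> is_adjoint ip (adj ip T) T.
Proof.
move=> hT x y; rewrite ipJ -adj_spec // -ipJ //.
Qed.

Lemma hasadj_adj T : hasadj T -> hasadj (adj ip T).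
Proof. by move=> hT; exists T; apply: adj_adjoint. Qed.

Lemma adjK T : hasadj T -> adj ip (adj ip T) = T.
Proof. by move=> hT; apply: adj_uniq; apply: adj_adjoint. Qed.

Lemma ip_adj_xx T : hasadj T -> forall x, ip (adj ip T x) x = (conjc (ip (T x) x)).
Proof. by move=> hT x; rewrite ipJ -adj_spec. Qed.

Lemma hasadj_add T S : hasadj T -> hasadj S -> hasadj (opadd T S).
Proof.
move=> hT hS; exists (opadd (adj ip T) (adj ip S)) => x y.
by rewrite /opadd ipDl ipDr !adj_spec.
Qed.

Lemma hasadj_scale a T : hasadj T -> hasadj (opscale a T).
Proof.
move=> hT; exists (opscale (conjc a) (adj ip T)) => x y.
by rewrite /opscale ipZl ipZr conjK adj_spec.
Qed.

Lemma hasadj_mul T S : hasadj T -> hasadj S -> hasadj (opmul T S).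
Proof.
move=> hT hS; exists (opmul (adj ip S) (adj ip T)) => x y.
by rewrite /opmul !adj_spec.
Qed.

Lemma adj_mul T S : hasadj T -> hasadj S ->
  adj ip (opmul T S) = opmul (adj ip S) (adj ip T).
Proof. by move=> hT hS; apply: adj_uniq => x y; rewrite /opmul !adj_spec. Qed.

Lemma lin_adj T : hasadj T -> lin (adj ip T).
Proof.
move=> hT a x y; apply: ip_ext => u.
by rewrite -adj_spec // ipDr ipZr ipDr ipZr -!adj_spec.
Qed.

Lemma lin_add {T S} : lin T -> lin S -> lin (opadd T S).
Proof.
move=> hT hS a x y; rewrite /opadd hT hS scalerDr.
by rewrite -!addrA; congr (_ + _); rewrite addrCA.
Qed.

Lemma lin_scale {b T} : lin T -> lin (opscale b T).
Proof.
by move=> hT a x y; rewrite /opscale hT scalerDr !scalerA mulrC.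
Qed.

Lemma lin_mul {T S} : lin T -> lin S -> lin (opmul T S).
Proof. by move=> hT hS a x y; rewrite /opmul hS hT. Qed.

Lemma bnd_add {T S} : bnd T -> bnd S -> bnd (opadd T S).
Proof.
move=> [M [M0 hM]] [N [N0 hN]]; exists (M + N); split; first exact: addr_ge0.
move=> x; rewrite /opadd; apply: le_trans (hnormD _ _) _; rewrite mulrDl; exact: lerD.
Qed.

Lemma bnd_scale {a T} : bnd T -> bnd (opscale a T).
Proof.
move=> [M [M0 hM]]; exists (cabs a * M); split; first by rewrite mulr_ge0 ?cabs_ge0.
by move=> x; rewrite /opscale hnormZ -mulrA ler_wpM2l ?cabs_ge0.
Qed.

Lemma bnd_mul {T S} : bnd T -> bnd S -> bnd (opmul T S).
Proof.
move=> [M [M0 hM]] [N [N0 hN]]; exists (M * N); split; first exact: mulr_ge0.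
by move=> x; rewrite /opmul -mulrA; apply: le_trans (hM _) _; rewrite ler_wpM2l.
Qed.

Lemma bnd_adj T : hasadj T -> bnd T -> bnd (adj ip T).
Proof.
move=> hT [M [M0 hM]]; exists M; split => // y.
set h := hnorm ip (adj ip T y).
have h0 : 0 <= h by exact: hnorm_ge0.
have key : h ^+ 2 <= M * h * hnorm ip y.
  rewrite /h hnorm_sq /qn -adj_spec //.
  apply: le_trans (cabs_Re _ _) _; apply: le_trans (CS _ _) _.
  by rewrite ler_wpM2r ?hnorm_ge0 // hM.
have [->|hp] := eqVneq h 0; first by rewrite mulr_ge0 ?hnorm_ge0.
have hp' : 0 < h by rewrite lt_def hp h0.
rewrite -(ler_pM2l hp') -expr2; apply: le_trans key _; rewrite mulrA.
by rewrite (mulrC M).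
Qed.

Lemma bnd_sph {T} : bnd T -> exists M, forall x, sphere1 ip x ->
  (0 <= hnorm ip (T x) <= M) /\ (0 <= cabs (ip (T x) x) <= M).
Proof.
move=> [M [M0 hM]]; exists M => x /= hx; split; apply/andP; split.
- exact: hnorm_ge0.
- by rewrite -[M]mulr1 -hx hM.
- exact: cabs_ge0.
- apply: le_trans (CS _ _) _; rewrite hx mulr1 -[M]mulr1 -hx hM //.
Qed.
Lemma RtoCM (a b : R) : a%:C * b%:C = (a * b)%:C :> R[i].
Proof. by simpc. Qed.
Lemma conjR (a : R) : conjc (a%:C) = a%:C :> R[i].
Proof. by rewrite /= oppr0. Qed.

Lemma qn_sph {x} : sphere1 ip x -> qn x = 1.
Proof. by move=> hx; rewrite -hnorm_sq hx expr1n. Qed.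

Lemma norm_unit {u} : hnorm ip u != 0 -> sphere1 ip ((hnorm ip u)^-1%:C *: u).
Proof.
move=> hu; rewrite /sphere1 /= hnormZ cabsR ger0_norm ?invr_ge0 ?hnorm_ge0 //.
by rewrite mulVf.
Qed.

Lemma numrad_ge0 T : bnd T -> 0 <= numrad ip T.
Proof.
move=> hb; have [M hM] := bnd_sph hb; apply: (supS_ge0 _ M) => x hx.
by case: (hM x hx).
Qed.

Lemma opnorm_ge0 T : bnd T -> 0 <= opnorm ip T.
Proof.
move=> hb; have [M hM] := bnd_sph hb; apply: (supS_ge0 _ M) => x hx.
by case: (hM x hx).
Qed.

Lemma le_numrad {T x} : bnd T -> sphere1 ip x -> cabs (ip (T x) x) <= numrad ip T.
Proof.
move=> hb hx; have [M hM] := bnd_sph hb; apply: (le_supS (fun x => cabs (ip (T x) x)) M) => // y hy.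
by case: (hM y hy) => _ /andP[].
Qed.

Lemma le_opnorm {T x} : bnd T -> sphere1 ip x -> hnorm ip (T x) <= opnorm ip T.
Proof.
move=> hb hx; have [M hM] := bnd_sph hb; apply: (le_supS (fun x => hnorm ip (T x)) M) => // y hy.
by case: (hM y hy) => /andP[].
Qed.

Lemma numrad_le_opnorm T : bnd T -> numrad ip T <= opnorm ip T.
Proof.
move=> hb; apply: supS_le; last exact: opnorm_ge0.
move=> x hx; apply: le_trans (CS _ _) _; rewrite hx mulr1; exact: le_opnorm.
Qed.

Lemma opnorm_bound T : lin T -> bnd T -> forall u,
  hnorm ip (T u) <= opnorm ip T * hnorm ip u.
Proof.
move=> hl hb u; set r := hnorm ip u.
have [r0|rn0] := eqVneq r 0.
  by rewrite r0 mulr0 (hnorm_eq0 _ r0) (lin0 hl) hnorm0.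
have r0' : 0 < r by rewrite lt_def rn0 hnorm_ge0.
have := le_opnorm hb (norm_unit rn0); rewrite -/r (linZ hl) hnormZ cabsR.
rewrite ger0_norm ?invr_ge0 ?(ltW r0') // mulrC => h.
by rewrite -ler_pdivrMr // mulrC.
Qed.

Lemma z_bound T : lin T -> bnd T -> forall u,
  cabs (ip (T u) u) <= numrad ip T * qn u.
Proof.
move=> hl hb u; set r := hnorm ip u.
have [r0|rn0] := eqVneq r 0.
  by rewrite (hnorm_eq0 _ r0) (lin0 hl) ip0l /cabs /= expr0n /= addr0 sqrtr0 mulr_ge0 ?numrad_ge0 ?qn_ge0.
have r0' : 0 < r by rewrite lt_def rn0 hnorm_ge0.
have := le_numrad hb (norm_unit rn0); rewrite -/r (linZ hl) ipZl ipZr conjR.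
rewrite !cabsM cabsR ger0_norm ?invr_ge0 ?(ltW r0') // mulrA -hnorm_sq -/r.
by rewrite -expr2 exprVn mulrC ler_pdivrMr // exprn_gt0.
Qed.

Lemma zexp T x y a : lin T -> ip (T (x + a *: y)) (x + a *: y) =
  ip (T x) x + conjc a * ip (T x) y + a * ip (T y) x + a * conjc a * ip (T y) y.
Proof.
move=> hl; rewrite (linD hl) (linZ hl) ipDl !ipDr !ipZl !ipZr; ring.
Qed.

Lemma polar4 (P Q U V : R[i]) :
  (P + conjc (Complex 1 0) * Q + Complex 1 0 * U + Complex 1 0 * conjc (Complex 1 0) * V)
  - (P + conjc (Complex (-1) 0) * Q + Complex (-1) 0 * U + Complex (-1) 0 * conjc (Complex (-1) 0) * V)
  + 'i * ((P + conjc 'i * Q + 'i * U + 'i * conjc 'i * V)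
  - (P + conjc (Complex 0 (-1)) * Q + Complex 0 (-1) * U + Complex 0 (-1) * conjc (Complex 0 (-1)) * V))
  = Complex 4 0 * Q.
Proof.
move: P Q U V => [p1 p2] [q1 q2] [u1 u2] [v1 v2]; simpc.
by apply/eqP; rewrite eq_complex /=; apply/andP; split; apply/eqP; ring.
Qed.

Lemma polar2 (P Q U V : R[i]) :
  (P + conjc (Complex 1 0) * Q + Complex 1 0 * U + Complex 1 0 * conjc (Complex 1 0) * V)
  - (P + conjc (Complex (-1) 0) * Q + Complex (-1) 0 * U + Complex (-1) 0 * conjc (Complex (-1) 0) * V)
  = Complex 2 0 * (Q + U).
Proof.
move: P Q U V => [p1 p2] [q1 q2] [u1 u2] [v1 v2]; simpc.
by apply/eqP; rewrite eq_complex /=; apply/andP; split; apply/eqP; ring.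
Qed.

Lemma qnDZ x y a : qn (x + a *: y) = qn x + cabs a ^+ 2 * qn y + 2 * Re (conjc a * ip x y).
Proof. by rewrite qnD qnZ ipZr. Qed.

Lemma qsum4 x y :
  qn (x + Complex 1 0 *: y) + qn (x + Complex (-1) 0 *: y) + qn (x + 'i *: y)
  + qn (x + Complex 0 (-1) *: y) = 4 * qn x + 4 * qn y.
Proof.
rewrite !qnDZ !cabs_sq /=; case: (ip x y) => c1 c2; simpc; rewrite /=; ring.
Qed.

Lemma qsum2 x y :
  qn (x + Complex 1 0 *: y) + qn (x + Complex (-1) 0 *: y) = 2 * qn x + 2 * qn y.
Proof.
rewrite !qnDZ !cabs_sq /=; case: (ip x y) => c1 c2; simpc; rewrite /=; ring.
Qed.

Lemma cabs4 (e1 e2 e3 e4 : R[i]) :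
  cabs (e1 - e2 + 'i * (e3 - e4)) <= cabs e1 + cabs e2 + cabs e3 + cabs e4.
Proof.
apply: le_trans (cabsD _ _ _) _; rewrite cabsM cabs_i mul1r.
have h1 := cabsD _ e1 (- e2); have h2 := cabsD _ e3 (- e4).
rewrite cabsN in h1; rewrite cabsN in h2; lra.
Qed.

Lemma cabs2 (e1 e2 : R[i]) : cabs (e1 - e2) <= cabs e1 + cabs e2.
Proof. by apply: le_trans (cabsD _ _ _) _; rewrite cabsN. Qed.

Lemma unitvec_ip T x : lin T -> hnorm ip (T x) != 0 ->
  ip (T x) ((hnorm ip (T x))^-1%:C *: T x) = (hnorm ip (T x))%:C.
Proof.
move=> hl hn; rewrite ipZr conjR ipxx -hnorm_sq RtoCM; congr (_%:C).
by rewrite expr2 mulrA mulVf ?mul1r.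
Qed.

Lemma opnorm_le_2numrad T : lin T -> bnd T -> opnorm ip T <= 2 * numrad ip T.
Proof.
move=> hl hb; rewrite /opnorm; apply: supS_le; last by rewrite mulr_ge0 ?numrad_ge0.
move=> x hx; set r := hnorm ip (T x).
have [r0|rn0] := eqVneq r 0; first by rewrite r0 mulr_ge0 ?numrad_ge0.
have r0' : 0 < r by rewrite lt_def rn0 hnorm_ge0.
set y := r^-1%:C *: T x.
have hy : sphere1 ip y by exact: norm_unit.
have hQ : ip (T x) y = r%:C by exact: unitvec_ip.
have key := polar4 (ip (T x) x) (ip (T x) y) (ip (T y) x) (ip (T y) y).
rewrite -!zexp // hQ in key.
have := cabs4 (ip (T (x + Complex 1 0 *: y)) (x + Complex 1 0 *: y))
  (ip (T (x + Complex (-1) 0 *: y)) (x + Complex (-1) 0 *: y))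
  (ip (T (x + 'i *: y)) (x + 'i *: y))
  (ip (T (x + Complex 0 (-1) *: y)) (x + Complex 0 (-1) *: y)).
rewrite key.
have -> : cabs (Complex 4 0 * r%:C) = 4 * r.
  by rewrite cabsM cabsR (cabsR _ 4) !ger0_norm ?(ltW r0').
have b1 := z_bound _ hl hb (x + Complex 1 0 *: y).
have b2 := z_bound _ hl hb (x + Complex (-1) 0 *: y).
have b3 := z_bound _ hl hb (x + 'i *: y).
have b4 := z_bound _ hl hb (x + Complex 0 (-1) *: y).
have qs := qsum4 x y; rewrite (qn_sph hx) (qn_sph hy) in qs.
move=> h.
have : 4 * r <= numrad ip T * 8.
  apply: le_trans h _; apply: le_trans (lerD (lerD (lerD b1 b2) b3) b4) _.
  rewrite -!mulrDr qs; apply: ler_wpM2l; [exact: numrad_ge0 | lra].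
lra.
Qed.

Lemma opnorm_le_numrad_sa T : lin T -> bnd T ->
  (forall x y, ip (T x) y = ip x (T y)) -> opnorm ip T <= numrad ip T.
Proof.
move=> hl hb hsa; rewrite /opnorm; apply: supS_le; last by rewrite numrad_ge0.
move=> x hx; set r := hnorm ip (T x).
have [r0|rn0] := eqVneq r 0; first by rewrite r0 numrad_ge0.
have r0' : 0 < r by rewrite lt_def rn0 hnorm_ge0.
set y := r^-1%:C *: T x.
have hy : sphere1 ip y by exact: norm_unit.
have hQ : ip (T x) y = r%:C by exact: unitvec_ip.
have hU : ip (T y) x = r%:C by rewrite hsa ipJ hQ conjR.
have key := polar2 (ip (T x) x) (ip (T x) y) (ip (T y) x) (ip (T y) y).
rewrite -!zexp // hQ hU in key.
have := cabs2 (ip (T (x + Complex 1 0 *: y)) (x + Complex 1 0 *: y))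
  (ip (T (x + Complex (-1) 0 *: y)) (x + Complex (-1) 0 *: y)).
rewrite key.
have -> : cabs (Complex 2 0 * (r%:C + r%:C)) = 4 * r.
  rewrite cabsM -rmorphD !cabsR !ger0_norm ?addr_ge0 ?(ltW r0') //; lra.
have b1 := z_bound _ hl hb (x + Complex 1 0 *: y).
have b2 := z_bound _ hl hb (x + Complex (-1) 0 *: y).
have qs := qsum2 x y; rewrite (qn_sph hx) (qn_sph hy) in qs.
move=> h.
have : 4 * r <= numrad ip T * 4.
  apply: le_trans h _; apply: le_trans (lerD b1 b2) _.
  rewrite -!mulrDr qs; apply: ler_wpM2l; [exact: numrad_ge0 | lra].
lra.
Qed.

Lemma numrad_sa T : lin T -> bnd T ->
  (forall x y, ip (T x) y = ip x (T y)) -> numrad ip T = opnorm ip T.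
Proof.
move=> hl hb hsa; apply/eqP; rewrite eq_le numrad_le_opnorm //.
exact: opnorm_le_numrad_sa.
Qed.
Lemma two_C : (2 : R[i]) = (2 : R)%:C.
Proof. by rewrite rmorph_nat. Qed.
Lemma inv2_C : (2 : R[i])^-1 = (2^-1 : R)%:C.
Proof. by rewrite two_C fmorphV. Qed.
Lemma inv2i_C : (2 * 'i : R[i])^-1 = Complex 0 (- 2^-1).
Proof.
have h : (2 * 'i : R[i]) != 0.
  rewrite mulf_eq0 negb_or two_C; apply/andP; split; apply/eqP; case.
  by move/eqP; rewrite pnatr_eq0.
  by move=> /eqP; rewrite oner_eq0.
apply: (mulfI h); rewrite mulfV // two_C; simpc.
apply/eqP; rewrite eq_complex /=; apply/andP; split; apply/eqP.
  by rewrite mulfV // pnatr_eq0.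
by [].
Qed.

Lemma normK (v : R) : `|v| ^+ 2 = v ^+ 2.
Proof. exact: real_normK (num_real v). Qed.

Lemma le_eqR (x y : R) : x = y -> x <= y.
Proof. by move->. Qed.

Lemma cabs_eqs (u z : R[i]) (c : R) : 0 <= c ->
  cabs u ^+ 2 = c ^+ 2 * cabs z ^+ 2 -> cabs u = c * cabs z.
Proof.
move=> c0 h; apply/eqP; rewrite eq_le cabs_le ?cabs_ge ?h //.
Qed.

Definition zf (T : H -> H) := fun x => cabs (ip (T x) x).
Definition wf (w v : R) (T : H -> H) :=
  fun x => cabs (w%:C * ip (T x) x + v%:C * conjc (ip (T x) x)).

Lemma zwop phi psi t T : hasadj T -> forall x,
  ip (wop ip phi psi t T x) x =
  (phi t)%:C * ip (T x) x + (psi t)%:C * conjc (ip (T x) x).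
Proof. by move=> ha x; rewrite /wop ipDl !ipZl ip_adj_xx. Qed.

Lemma wnumradE phi psi t T : hasadj T ->
  wnumrad ip phi psi t T = sup (wf (phi t) (psi t) T @` sphere1 ip).
Proof.
move=> ha; rewrite /wnumrad /numrad; congr (sup _); apply: eq_imagel => x _.
by rewrite zwop.
Qed.

Lemma wcrawfordE phi psi t T : hasadj T ->
  wcrawford ip phi psi t T = inf (wf (phi t) (psi t) T @` sphere1 ip).
Proof.
move=> ha; rewrite /wcrawford /crawford; congr (inf _); apply: eq_imagel => x _.
by rewrite zwop.
Qed.

Lemma numradE T : numrad ip T = sup (zf T @` sphere1 ip).
Proof. by []. Qed.
Lemma crawfordE T : crawford ip T = inf (zf T @` sphere1 ip).
Proof. by []. Qed.

Lemma PW7a (w v : R) (z : R[i]) :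
  cabs (w%:C * z + v%:C * conjc z) <= (`|w| + `|v|) * cabs z.
Proof.
apply: le_trans (cabsD _ _ _) _; rewrite !cabsM !cabsR cabsJ mulrDl //.
Qed.

Lemma PWgen (w v c : R) (z : R[i]) : 0 <= c -> c <= `|w + v| -> c <= `|w - v| ->
  c * cabs z <= cabs (w%:C * z + v%:C * conjc z).
Proof.
move=> c0 h1 h2; apply: cabs_ge => //.
have e1 : c ^+ 2 <= (w + v) ^+ 2.
  by rewrite -[X in _ <= X]normK ler_sqr ?nnegrE ?normr_ge0.
have e2 : c ^+ 2 <= (w - v) ^+ 2.
  by rewrite -[X in _ <= X]normK ler_sqr ?nnegrE ?normr_ge0.
rewrite !cabs_sq; case: z => a b; simpc; rewrite /=.
apply: (@le_trans _ _ ((w + v) ^+ 2 * a ^+ 2 + (w - v) ^+ 2 * b ^+ 2)).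
  rewrite mulrDr; apply: lerD; rewrite ler_wpM2r ?sqr_ge0 //.
by apply: le_eqR; ring.
Qed.

Lemma PW0l (v : R) (z : R[i]) :
  cabs ((0:R)%:C * z + v%:C * conjc z) = `|v| * cabs z.
Proof. by rewrite mul0r add0r cabsM cabsR cabsJ. Qed.

Lemma PW0r (w : R) (z : R[i]) :
  cabs (w%:C * z + (0:R)%:C * conjc z) = `|w| * cabs z.
Proof. by rewrite mul0r addr0 cabsM cabsR. Qed.

Lemma PWre (w : R) (z : R[i]) :
  cabs (w%:C * z + w%:C * conjc z) = 2 * `|w| * cabs ((2^-1 : R)%:C * (z + conjc z)).
Proof.
apply: cabs_eqs; first by rewrite mulr_ge0.
rewrite !cabs_sq; case: z => a b; simpc; rewrite /= exprMn normK.
have h2 : (2 : R) != 0 by rewrite pnatr_eq0.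
by field.
Qed.

Lemma PWim (z : R[i]) :
  cabs ((1:R)%:C * z + (-1 : R)%:C * conjc z) = 2 * cabs (Complex 0 (- 2^-1) * (z - conjc z)).
Proof.
apply: cabs_eqs => //.
rewrite !cabs_sq; case: z => a b; simpc; rewrite /=.
have h2 : (2 : R) != 0 by rewrite pnatr_eq0.
by field.
Qed.

Lemma PWi (w v : R) (z : R[i]) :
  cabs (w%:C * ('i * z) + v%:C * conjc ('i * z)) = cabs (w%:C * z + (- v)%:C * conjc z).
Proof.
have := @cabs_eqs (w%:C * ('i * z) + v%:C * conjc ('i * z)) (w%:C * z + (- v)%:C * conjc z) 1.
rewrite mul1r; apply => //; rewrite expr1n mul1r.
rewrite !cabs_sq; case: z => a b; simpc; rewrite /=; ring.
Qed.

Lemma PWsa (w v : R) (z : R[i]) : conjc z = z ->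
  cabs (w%:C * z + v%:C * conjc z) = `|w + v| * cabs z.
Proof. by move->; rewrite -mulrDl -rmorphD cabsM cabsR. Qed.

Lemma PWJ (w v : R) (z : R[i]) :
  cabs (v%:C * conjc z + w%:C * conjc (conjc z)) = cabs (w%:C * z + v%:C * conjc z).
Proof. by rewrite conjK addrC. Qed.

Lemma PWadd (w v : R) (z1 z2 : R[i]) :
  cabs (w%:C * (z1 + z2) + v%:C * conjc (z1 + z2)) <=
  cabs (w%:C * z1 + v%:C * conjc z1) + cabs (w%:C * z2 + v%:C * conjc z2).
Proof.
rewrite conjD.
have -> : w%:C * (z1 + z2) + v%:C * (conjc z1 + conjc z2) =
  (w%:C * z1 + v%:C * conjc z1) + (w%:C * z2 + v%:C * conjc z2) by ring.
exact: cabsD.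
Qed.

Lemma PWaddw (w1 w2 v1 v2 : R) (z : R[i]) :
  cabs ((w1 + w2)%:C * z + (v1 + v2)%:C * conjc z) <=
  cabs (w1%:C * z + v1%:C * conjc z) + cabs (w2%:C * z + v2%:C * conjc z).
Proof.
rewrite !rmorphD.
have -> : (w1%:C + w2%:C) * z + (v1%:C + v2%:C) * conjc z =
  (w1%:C * z + v1%:C * conjc z) + (w2%:C * z + v2%:C * conjc z) by ring.
exact: cabsD.
Qed.

Lemma zf_bnd {T} : bnd T -> exists M, forall x, sphere1 ip x -> 0 <= zf T x <= M.
Proof. by move=> hb; have [M hM] := bnd_sph hb; exists M => x /hM []. Qed.

Lemma wf_bnd w v {T} : bnd T -> exists M, forall x, sphere1 ip x -> 0 <= wf w v T x <= M.
Proof.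
move=> hb; have [M hM] := bnd_sph hb; exists ((`|w| + `|v|) * M) => x hx.
rewrite cabs_ge0 /=; apply: le_trans (PW7a _ _ _) _.
by rewrite ler_wpM2l ?addr_ge0 //; case: (hM x hx) => _ /andP[].
Qed.
Section Parts.
Variables (T : H -> H) (hl : lin T) (hb : bnd T) (ha : hasadj T).
Variables (phi psi : R -> R) (t : R).

Lemma lin_wop f g : lin (wop ip f g t T).
Proof. exact: (lin_add (lin_scale hl) (lin_scale (lin_adj _ ha))). Qed.
Lemma bnd_wop f g : bnd (wop ip f g t T).
Proof. exact: (bnd_add (bnd_scale hb) (bnd_scale (bnd_adj _ ha hb))). Qed.


Lemma part1a : wnumrad ip (cstw 0) psi t T = `|psi t| * numrad ip T.
Proof.
rewrite wnumradE // numradE.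
have -> : wf (cstw 0 t) (psi t) T = (fun x => `|psi t| * zf T x).
  by apply: funext => x; rewrite /wf /cstw PW0l.
have [M hM] := zf_bnd hb; exact: (supS_scale _ _ M).
Qed.

Lemma part1b : wcrawford ip (cstw 0) psi t T = `|psi t| * crawford ip T.
Proof.
rewrite wcrawfordE // crawfordE.
have -> : wf (cstw 0 t) (psi t) T = (fun x => `|psi t| * zf T x).
  by apply: funext => x; rewrite /wf /cstw PW0l.
by apply: infS_scale => // x _; exact: cabs_ge0.
Qed.

Lemma part2a : wnumrad ip phi (cstw 0) t T = `|phi t| * numrad ip T.
Proof.
rewrite wnumradE // numradE.
have -> : wf (phi t) (cstw 0 t) T = (fun x => `|phi t| * zf T x).
  by apply: funext => x; rewrite /wf /cstw PW0r.
have [M hM] := zf_bnd hb; exact: (supS_scale _ _ M).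
Qed.

Lemma part2b : wcrawford ip phi (cstw 0) t T = `|phi t| * crawford ip T.
Proof.
rewrite wcrawfordE // crawfordE.
have -> : wf (phi t) (cstw 0 t) T = (fun x => `|phi t| * zf T x).
  by apply: funext => x; rewrite /wf /cstw PW0r.
by apply: infS_scale => // x _; exact: cabs_ge0.
Qed.

Lemma ReOpE : ReOp ip T = opscale (2^-1) (opadd T (adj ip T)).
Proof. by []. Qed.
Lemma lin_Re : lin (ReOp ip T).
Proof. rewrite ReOpE; exact: (lin_scale (lin_add hl (lin_adj _ ha))). Qed.
Lemma bnd_Re : bnd (ReOp ip T).
Proof. rewrite ReOpE; exact: (bnd_scale (bnd_add hb (bnd_adj _ ha hb))). Qed.
Lemma sa_Re : forall x y, ip (ReOp ip T x) y = ip x (ReOp ip T y).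
Proof.
move=> x y; rewrite /ReOp ipZl ipZr ipDl ipDr inv2_C conjR.
rewrite adj_spec // (adj_adjoint _ ha); ring.
Qed.
Lemma zRe x : ip (ReOp ip T x) x =
  (2^-1 : R)%:C * (ip (T x) x + conjc (ip (T x) x)).
Proof. by rewrite /ReOp ipZl ipDl ip_adj_xx // inv2_C. Qed.

Lemma ImOpE : ImOp ip T = opscale ((2 * 'i)^-1) (opadd T (opscale (-1) (adj ip T))).
Proof. by apply: funext => x; rewrite /ImOp /opscale /opadd scaleN1r. Qed.
Lemma lin_Im : lin (ImOp ip T).
Proof.
rewrite ImOpE; exact: (lin_scale (lin_add hl (lin_scale (lin_adj _ ha)))).
Qed.
Lemma bnd_Im : bnd (ImOp ip T).
Proof.
rewrite ImOpE; exact: (bnd_scale (bnd_add hb (bnd_scale (bnd_adj _ ha hb)))).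
Qed.
Lemma sa_Im : forall x y, ip (ImOp ip T x) y = ip x (ImOp ip T y).
Proof.
move=> x y; rewrite /ImOp ipZl ipZr ipBl ipBr inv2i_C.
rewrite adj_spec // (adj_adjoint _ ha).
have -> : conjc (Complex 0 (- 2^-1) : R[i]) = - Complex 0 (- 2^-1).
  by simpc.
ring.
Qed.
Lemma zIm x : ip (ImOp ip T x) x =
  Complex 0 (- 2^-1) * (ip (T x) x - conjc (ip (T x) x)).
Proof. by rewrite /ImOp ipZl ipBl ip_adj_xx // inv2i_C. Qed.

Lemma part8a : wnumrad ip phi phi t T = 2 * `|phi t| * numrad ip (ReOp ip T).
Proof.
rewrite wnumradE // numradE.
have -> : wf (phi t) (phi t) T = (fun x => (2 * `|phi t|) * zf (ReOp ip T) x).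
  by apply: funext => x; rewrite /wf /zf PWre zRe.
have [M hM] := zf_bnd bnd_Re.
by apply: (supS_scale _ _ M) => //; rewrite mulr_ge0.
Qed.

Lemma part8c : wcrawford ip phi phi t T = 2 * `|phi t| * crawford ip (ReOp ip T).
Proof.
rewrite wcrawfordE // crawfordE.
have -> : wf (phi t) (phi t) T = (fun x => (2 * `|phi t|) * zf (ReOp ip T) x).
  by apply: funext => x; rewrite /wf /zf PWre zRe.
apply: infS_scale; [by rewrite mulr_ge0 | move=> x _; exact: cabs_ge0].
Qed.

Lemma part8b : numrad ip (ReOp ip T) = opnorm ip (ReOp ip T).
Proof. exact: (numrad_sa _ lin_Re bnd_Re sa_Re). Qed.

Lemma part4a : wcrawford ip (cstw 1) (cstw (-1)) t T = 2 * crawford ip (ImOp ip T).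
Proof.
rewrite wcrawfordE // crawfordE.
have -> : wf (cstw 1 t) (cstw (-1) t) T = (fun x => 2 * zf (ImOp ip T) x).
  by apply: funext => x; rewrite /wf /zf /cstw PWim zIm.
apply: infS_scale => // x _; exact: cabs_ge0.
Qed.

Lemma part4b : wnumrad ip (cstw 1) (cstw (-1)) t T = 2 * opnorm ip (ImOp ip T).
Proof.
rewrite wnumradE // -(numrad_sa _ lin_Im bnd_Im sa_Im) numradE.
have -> : wf (cstw 1 t) (cstw (-1) t) T = (fun x => 2 * zf (ImOp ip T) x).
  by apply: funext => x; rewrite /wf /zf /cstw PWim zIm.
have [M hM] := zf_bnd bnd_Im.
by apply: (supS_scale _ _ M).
Qed.

Lemma part5 : wnumrad ip phi psi t (opscale 'i T) = wnumrad ip phi (oppw psi) t T.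
Proof.
rewrite !wnumradE //; last exact: hasadj_scale.
congr (sup _); apply: eq_imagel => x _.
by rewrite /wf /opscale /oppw ipZl PWi.
Qed.

Lemma part6 : wnorm ip phi psi t T / 2 <= wnumrad ip phi psi t T /\
   wnumrad ip phi psi t T <= wnorm ip phi psi t T.
Proof.
rewrite /wnorm /wnumrad; split.
  have := opnorm_le_2numrad _ (lin_wop phi psi) (bnd_wop phi psi).
  rewrite ler_pdivrMr //; lra.
exact: numrad_le_opnorm _ (bnd_wop phi psi).
Qed.

Lemma part7a : wnumrad ip phi psi t T <= (`|phi t| + `|psi t|) * numrad ip T.
Proof.
have [M hM] := zf_bnd hb.
have c0 : 0 <= `|phi t| + `|psi t| by rewrite addr_ge0.
rewrite wnumradE // numradE -(supS_scale _ _ M c0 hM).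
apply: (supS_mono _ _ ((`|phi t| + `|psi t|) * M)).
  by move=> x hx; rewrite cabs_ge0 /=; exact: PW7a.
by move=> x hx; rewrite ler_wpM2l //; case/andP: (hM x hx).
Qed.

Lemma part7b :
  `| `|phi t| - `|psi t| | * crawford ip T <= wcrawford ip phi psi t T.
Proof.
rewrite wcrawfordE // crawfordE -infS_scale //; last by move=> x _; exact: cabs_ge0.
apply: infS_mono => x hx; rewrite mulr_ge0 ?cabs_ge0 //=.
apply: PWgen => //.
  by have := ler_dist_dist (phi t) (- psi t); rewrite normrN opprK.
exact: ler_dist_dist.
Qed.

Lemma part19 :
  Num.min `|phi t + psi t| `|phi t - psi t| * crawford ip T <= wcrawford ip phi psi t T.
Proof.
have c0 : 0 <= Num.min `|phi t + psi t| `|phi t - psi t| by rewrite le_min !normr_ge0.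
rewrite wcrawfordE // crawfordE -(infS_scale _ _ c0); last by move=> x _; exact: cabs_ge0.
apply: infS_mono => x hx; rewrite mulr_ge0 ?cabs_ge0 ?le_min ?normr_ge0 //=.
by apply: PWgen; rewrite ?le_min ?normr_ge0 // ge_min lexx ?orbT.
Qed.

Lemma part10 : adj ip T = T ->
   wnumrad ip phi psi t T = `|phi t + psi t| * numrad ip T /\
   `|phi t + psi t| * numrad ip T = `|phi t + psi t| * opnorm ip T.
Proof.
move=> hsa; split; last first.
  congr (_ * _); apply: numrad_sa => // x y; by rewrite adj_spec // hsa.
rewrite wnumradE // numradE.
have -> : wf (phi t) (psi t) T = (fun x => `|phi t + psi t| * zf T x).
  apply: funext => x; rewrite /wf /zf PWsa //.
  by rewrite -ip_adj_xx // hsa.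
have [M hM] := zf_bnd hb; exact: (supS_scale _ _ M).
Qed.

Lemma part11 : wnumrad ip phi psi t T = wnumrad ip psi phi t (adj ip T).
Proof.
rewrite !wnumradE //; last exact: hasadj_adj.
congr (sup _); apply: eq_imagel => x _.
by rewrite /wf ip_adj_xx // PWJ.
Qed.

Lemma part16 : wcrawford ip phi psi t T <=
  `|phi t| * crawford ip T + `|psi t| * numrad ip T.
Proof.
rewrite wcrawfordE // crawfordE.
apply: infS_affine; rewrite ?mulr_ge0 ?numrad_ge0 //; last by move=> x _; exact: cabs_ge0.
move=> x hx; rewrite cabs_ge0 /=; apply: le_trans (PW7a _ _ _) _.
rewrite mulrDl lerD2l ler_wpM2l //; exact: le_numrad.
Qed.

Lemma part18 (f1 f2 g1 g2 : R -> R) :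
  wnumrad ip (addw f1 f2) (addw g1 g2) t T <= wnumrad ip f1 g1 t T + wnumrad ip f2 g2 t T.
Proof.
rewrite !wnumradE //.
have [M1 hM1] := wf_bnd (f1 t) (g1 t) hb.
have [M2 hM2] := wf_bnd (f2 t) (g2 t) hb.
apply: (supS_add _ _ _ (Num.max M1 M2)).
- by move=> x hx; rewrite cabs_ge0 /=; exact: PWaddw.
- move=> x hx; case/andP: (hM1 x hx) => -> h /=; by rewrite le_max h.
- move=> x hx; case/andP: (hM2 x hx) => -> h /=; by rewrite le_max h orbT.
Qed.

End Parts.
Lemma part13 T S phi psi t : bnd T -> hasadj T -> bnd S -> hasadj S ->
  wnumrad ip phi psi t (opadd T S) <= wnumrad ip phi psi t T + wnumrad ip phi psi t S.
Proof.
move=> hbT haT hbS haS.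
rewrite (wnumradE _ _ _ _ (hasadj_add _ _ haT haS)) (wnumradE _ _ _ _ haT).
rewrite (wnumradE _ _ _ _ haS).
have [M1 hM1] := wf_bnd (phi t) (psi t) hbT.
have [M2 hM2] := wf_bnd (phi t) (psi t) hbS.
apply: (supS_add _ _ _ (Num.max M1 M2)).
- move=> x hx; rewrite cabs_ge0 /=; rewrite /wf /opadd ipDl; exact: PWadd.
- move=> x hx; case/andP: (hM1 x hx) => -> h /=; by rewrite le_max h.
- move=> x hx; case/andP: (hM2 x hx) => -> h /=; by rewrite le_max h orbT.
Qed.

Lemma part14 T S phi psi t : bnd T -> hasadj T -> bnd S -> hasadj S ->
  wcrawford ip phi psi t (opadd T S) <= wnumrad ip phi psi t T + wcrawford ip phi psi t S.
Proof.
move=> hbT haT hbS haS.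
rewrite (wcrawfordE _ _ _ _ (hasadj_add _ _ haT haS)) (wnumradE _ _ _ _ haT).
rewrite (wcrawfordE _ _ _ _ haS).
have [M hM] := wf_bnd (phi t) (psi t) hbT.
set b := sup (wf (phi t) (psi t) T @` sphere1 ip).
have b0 : 0 <= b by exact: (supS_ge0 _ M hM).
apply: le_trans (infS_affine (wf (phi t) (psi t) (opadd T S)) (wf (phi t) (psi t) S)
   1 b ler01 b0 _ _) _.
- move=> x hx; rewrite cabs_ge0 /= mul1r.
  have := PWadd (phi t) (psi t) (ip (T x) x) (ip (S x) x).
  rewrite -ipDl => h; apply: le_trans h _.
  rewrite addrC lerD2l; apply: (le_supS (wf (phi t) (psi t) T) M) => // y hy; by case/andP: (hM y hy).
- move=> x _; exact: cabs_ge0.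
- by rewrite mul1r addrC.
Qed.

Lemma adj_norm_le T x : lin T -> bnd T -> hasadj T -> sphere1 ip x ->
  hnorm ip (adj ip T x) <= opnorm ip T.
Proof.
move=> hl hb ha hx; set h := hnorm ip (adj ip T x).
have h0 : 0 <= h by exact: hnorm_ge0.
have key : h ^+ 2 <= opnorm ip T * h.
  rewrite /h hnorm_sq /qn -adj_spec //.
  apply: le_trans (cabs_Re _ _) _; apply: le_trans (CS _ _) _.
  by rewrite hx mulr1; apply: opnorm_bound.
have [->|hp] := eqVneq h 0; first exact: opnorm_ge0.
have hp' : 0 < h by rewrite lt_def hp h0.
by rewrite -(ler_pM2r hp') -expr2.
Qed.

Lemma ReRM (r : R) (u : R[i]) : Re (r%:C * u) = r * Re u.
Proof. by case: u => a b; simpc; rewrite /=. Qed.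

Lemma part17 T phi psi t : lin T -> bnd T -> hasadj T ->
  wnorm ip phi psi t T ^+ 2
     <= (`|phi t| ^+ 2 + `|psi t| ^+ 2) * opnorm ip T ^+ 2
        + `|phi t * psi t| * numrad ip (opmul T T)
        + `|phi t * psi t| * numrad ip (opmul (adj ip T) (adj ip T)).
Proof.
move=> hl hb ha.
have -> : numrad ip (opmul (adj ip T) (adj ip T)) = numrad ip (opmul T T).
  rewrite !numradE; congr (sup _); apply: eq_imagel => x _.
  by rewrite /zf /opmul ipJ -!adj_spec // cabsJ.
set w := phi t; set v := psi t.
set on := opnorm ip T; set nr := numrad ip (opmul T T).
have on0 : 0 <= on by exact: opnorm_ge0.
have hbTT : bnd (opmul T T) by exact: bnd_mul.
have nr0 : 0 <= nr by exact: numrad_ge0.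
set K := (_ + _ + _).
have K0 : 0 <= K by rewrite /K !addr_ge0 ?mulr_ge0 ?addr_ge0 ?sqr_ge0.
have hK : forall x, sphere1 ip x -> qn (wop ip phi psi t T x) <= K.
  move=> x hx; rewrite /wop qnD !qnZ ipZl ipZr conjR -adj_spec //.
  rewrite mulrA RtoCM ReRM !cabsR -/w -/v.
  have q1 : qn (T x) <= on ^+ 2.
    rewrite -hnorm_sq ler_sqr ?nnegrE ?hnorm_ge0 //; exact: le_opnorm.
  have q2 : qn (adj ip T x) <= on ^+ 2.
    rewrite -hnorm_sq ler_sqr ?nnegrE ?hnorm_ge0 //; exact: adj_norm_le.
  have q3 : w * v * Re (ip (T (T x)) x) <= `|w * v| * nr.
    apply: le_trans (ler_norm _) _; rewrite normrM ler_wpM2l //.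
    apply: le_trans (cabs_normRe _ _) _.
    exact: (@le_numrad (opmul T T) x hbTT hx).
  have q4 : `|w| ^+ 2 * qn (T x) <= `|w| ^+ 2 * on ^+ 2 by rewrite ler_wpM2l ?sqr_ge0.
  have q5 : `|v| ^+ 2 * qn (adj ip T x) <= `|v| ^+ 2 * on ^+ 2 by rewrite ler_wpM2l ?sqr_ge0.
  rewrite /K; lra.
have hw : wnorm ip phi psi t T <= Num.sqrt K.
  rewrite /wnorm /opnorm; apply: supS_le; last exact: sqrtr_ge0.
  by move=> x hx; rewrite /hnorm ler_sqrt //; exact: hK.
have w0 : 0 <= wnorm ip phi psi t T.
  apply: opnorm_ge0; exact: (bnd_add (bnd_scale hb) (bnd_scale (bnd_adj _ ha hb))).
by rewrite -[K]sqr_sqrtr // ler_sqr ?nnegrE ?sqrtr_ge0.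
Qed.

Lemma prop_sec (A B : H -> H) (hA : bounded_op ip A) (hB : bounded_op ip B)
  (adjA : exists As : H -> H, is_adjoint ip A As)
  (adjB : exists Bs : H -> H, is_adjoint ip B Bs)
  (t : R) (phi psi phi1 phi2 psi1 psi2 : R -> R) :
  (wnumrad ip (cstw 0) psi t A = `|psi t| * numrad ip A /\
   wcrawford ip (cstw 0) psi t A = `|psi t| * crawford ip A) /\
  (wnumrad ip phi (cstw 0) t A = `|phi t| * numrad ip A /\
   wcrawford ip phi (cstw 0) t A = `|phi t| * crawford ip A) /\
  (wnumrad ip (cstw 1) (cstw 1) t A = 2 * opnorm ip (ReOp ip A) /\
   wcrawford ip (cstw 1) (cstw 1) t A = 2 * crawford ip (ReOp ip A)) /\
  (wnumrad ip (cstw 1) (cstw (-1)) t A = 2 * opnorm ip (ImOp ip A) /\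
   wcrawford ip (cstw 1) (cstw (-1)) t A = 2 * crawford ip (ImOp ip A)) /\
  (wnumrad ip phi psi t (opscale 'i A) = wnumrad ip phi (oppw psi) t A) /\
  (wnorm ip phi psi t A / 2 <= wnumrad ip phi psi t A /\
   wnumrad ip phi psi t A <= wnorm ip phi psi t A) /\
  (wnumrad ip phi psi t A <= (`|phi t| + `|psi t|) * numrad ip A /\
   `| `|phi t| - `|psi t| | * crawford ip A <= wcrawford ip phi psi t A) /\
  (wnumrad ip phi phi t A = 2 * `|phi t| * numrad ip (ReOp ip A) /\
   2 * `|phi t| * numrad ip (ReOp ip A) = 2 * `|phi t| * opnorm ip (ReOp ip A)) /\
  (wnumrad ip psi psi t A = 2 * `|psi t| * numrad ip (ReOp ip A) /\
   2 * `|psi t| * numrad ip (ReOp ip A) = 2 * `|psi t| * opnorm ip (ReOp ip A)) /\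
  (adj ip A = A ->
   wnumrad ip phi psi t A = `|phi t + psi t| * numrad ip A /\
   `|phi t + psi t| * numrad ip A = `|phi t + psi t| * opnorm ip A) /\
  (wnumrad ip phi psi t A = wnumrad ip psi phi t (adj ip A)) /\
  (adj ip A = A -> wnumrad ip phi psi t A = wnumrad ip psi phi t A) /\
  (wnumrad ip phi psi t (opadd A B)
     <= wnumrad ip phi psi t A + wnumrad ip phi psi t B) /\
  (wcrawford ip phi psi t (opadd A B)
     <= wnumrad ip phi psi t A + wcrawford ip phi psi t B) /\
  (wnumrad ip phi psi t (opmul A B)
     <= (`|phi t| + `|psi t|) * numrad ip (opmul A B)) /\
  (wcrawford ip phi psi t (opmul A B)
     <= `|phi t| * crawford ip (opmul A B) + `|psi t| * numrad ip (opmul A B)) /\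
  (wnorm ip phi psi t (opmul A B) ^+ 2
     <= (`|phi t| ^+ 2 + `|psi t| ^+ 2) * opnorm ip (opmul A B) ^+ 2
        + `|phi t * psi t| * numrad ip (opmul (opmul A B) (opmul A B))
        + `|phi t * psi t| *
            numrad ip (opmul (opmul (adj ip B) (adj ip A))
                             (opmul (adj ip B) (adj ip A)))) /\
  (wnumrad ip (addw phi1 phi2) (addw psi1 psi2) t A
     <= wnumrad ip phi1 psi1 t A + wnumrad ip phi2 psi2 t A) /\
  (Num.min `|phi t + psi t| `|phi t - psi t| * crawford ip A
     <= wcrawford ip phi psi t A).
Proof.
have hlA := bounded_lin _ hA; have hbA := bounded_bnd _ hA.
have hlB := bounded_lin _ hB; have hbB := bounded_bnd _ hB.
have haA : hasadj A := adjA; have haB : hasadj B := adjB.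
have hlAB : lin (opmul A B) by exact: lin_mul.
have hbAB : bnd (opmul A B) by exact: bnd_mul.
have haAB : hasadj (opmul A B) by exact: hasadj_mul.
split; first by split; [apply: part1a | apply: part1b].
split; first by split; [apply: part2a | apply: part2b].
split.
  split.
    by rewrite (part8a _ hbA haA) -(part8b _ hlA hbA haA) /cstw /= normr1 mulr1.
  by rewrite (part8c _ haA) /cstw /= normr1 mulr1.
split; first by split; [apply: part4b | apply: part4a].
split; first by apply: part5.
split; first by apply: part6.
split; first by split; [apply: part7a | apply: part7b].
split; first by split; [apply: part8a | rewrite (part8b _ hlA hbA haA)].
split; first by split; [apply: part8a | rewrite (part8b _ hlA hbA haA)].
split; first by move=> e; apply: part10.
split; first by apply: part11.
split; first by move=> e; rewrite {1}(part11 _ haA phi psi t) e.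
split; first by apply: part13.
split; first by apply: part14.
split; first by apply: part7a.
split; first by apply: part16.
split; first by rewrite -(adj_mul _ _ haA haB); apply: part17.
split; first by apply: part18.
by apply: part19.
Qed.

End IP.

Theorem proposition2p1
  (R : realType) (H : lmodType R[i]) (ip : H -> H -> R[i])
  (hH : hilbert_space ip)
  (A B : H -> H) (hA : bounded_op ip A) (hB : bounded_op ip B)
  (adjA : exists As : H -> H, is_adjoint ip A As)
  (adjB : exists Bs : H -> H, is_adjoint ip B Bs)
  (t : R) (ht0 : 0 <= t) (ht1 : t <= 1)
  (phi psi phi1 phi2 psi1 psi2 : R -> R)
  (cphi : cont01 phi) (cpsi : cont01 psi)
  (cphi1 : cont01 phi1) (cphi2 : cont01 phi2)
  (cpsi1 : cont01 psi1) (cpsi2 : cont01 psi2) :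
  (* (1) *)
  (wnumrad ip (cstw 0) psi t A = `|psi t| * numrad ip A /\
   wcrawford ip (cstw 0) psi t A = `|psi t| * crawford ip A) /\
  (* (2) *)
  (wnumrad ip phi (cstw 0) t A = `|phi t| * numrad ip A /\
   wcrawford ip phi (cstw 0) t A = `|phi t| * crawford ip A) /\
  (* (3) *)
  (wnumrad ip (cstw 1) (cstw 1) t A = 2 * opnorm ip (ReOp ip A) /\
   wcrawford ip (cstw 1) (cstw 1) t A = 2 * crawford ip (ReOp ip A)) /\
  (* (4) *)
  (wnumrad ip (cstw 1) (cstw (-1)) t A = 2 * opnorm ip (ImOp ip A) /\
   wcrawford ip (cstw 1) (cstw (-1)) t A = 2 * crawford ip (ImOp ip A)) /\
  (* (5) *)
  (wnumrad ip phi psi t (opscale 'i A) = wnumrad ip phi (oppw psi) t A) /\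
  (* (6) *)
  (wnorm ip phi psi t A / 2 <= wnumrad ip phi psi t A /\
   wnumrad ip phi psi t A <= wnorm ip phi psi t A) /\
  (* (7) *)
  (wnumrad ip phi psi t A <= (`|phi t| + `|psi t|) * numrad ip A /\
   `| `|phi t| - `|psi t| | * crawford ip A <= wcrawford ip phi psi t A) /\
  (* (8) *)
  (wnumrad ip phi phi t A = 2 * `|phi t| * numrad ip (ReOp ip A) /\
   2 * `|phi t| * numrad ip (ReOp ip A) = 2 * `|phi t| * opnorm ip (ReOp ip A)) /\
  (* (9) *)
  (wnumrad ip psi psi t A = 2 * `|psi t| * numrad ip (ReOp ip A) /\
   2 * `|psi t| * numrad ip (ReOp ip A) = 2 * `|psi t| * opnorm ip (ReOp ip A)) /\
  (* (10) *)
  (adj ip A = A ->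
   wnumrad ip phi psi t A = `|phi t + psi t| * numrad ip A /\
   `|phi t + psi t| * numrad ip A = `|phi t + psi t| * opnorm ip A) /\
  (* (11) *)
  (wnumrad ip phi psi t A = wnumrad ip psi phi t (adj ip A)) /\
  (* (12) *)
  (adj ip A = A -> wnumrad ip phi psi t A = wnumrad ip psi phi t A) /\
  (* (13) *)
  (wnumrad ip phi psi t (opadd A B)
     <= wnumrad ip phi psi t A + wnumrad ip phi psi t B) /\
  (* (14) *)
  (wcrawford ip phi psi t (opadd A B)
     <= wnumrad ip phi psi t A + wcrawford ip phi psi t B) /\
  (* (15) *)
  (wnumrad ip phi psi t (opmul A B)
     <= (`|phi t| + `|psi t|) * numrad ip (opmul A B)) /\
  (* (16) *)
  (wcrawford ip phi psi t (opmul A B)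
     <= `|phi t| * crawford ip (opmul A B) + `|psi t| * numrad ip (opmul A B)) /\
  (* (17) *)
  (wnorm ip phi psi t (opmul A B) ^+ 2
     <= (`|phi t| ^+ 2 + `|psi t| ^+ 2) * opnorm ip (opmul A B) ^+ 2
        + `|phi t * psi t| * numrad ip (opmul (opmul A B) (opmul A B))
        + `|phi t * psi t| *
            numrad ip (opmul (opmul (adj ip B) (adj ip A))
                             (opmul (adj ip B) (adj ip A)))) /\
  (* (18) *)
  (wnumrad ip (addw phi1 phi2) (addw psi1 psi2) t A
     <= wnumrad ip phi1 psi1 t A + wnumrad ip phi2 psi2 t A) /\
  (* (19) *)
  (Num.min `|phi t + psi t| `|phi t - psi t| * crawford ip A
     <= wcrawford ip phi psi t A).
Proof.
case: (hH) => hip _.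
exact: (@prop_sec R H ip hip A B hA hB adjA adjB t phi psi phi1 phi2 psi1 psi2).
Qed.
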